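(* In the discrete setting described in the context, suppose $x\in M$ satisfies $w^t(x)=w^{t-1}(x)+c^t(x)$. If $c^t(z)\ge c^t(x)$ for all $z\in M$ with $z\ge x$, then $w^t(z)\ge w^{t-1}(z)+c^t(x)$ for all $z\in M$ with $z\ge x$. Similarly, if $c^t(z)\ge c^t(x)$ for all $z\in M$ with $z\le x$, then $w^t(z)\ge w^{t-1}(z)+c^t(x)$ for all $z\in M$ with $z\le x$.
   Context: Discrete setting: a finite set of states $M=\{x_1,\dots,x_m\}\subset\mathbb{R}^+$ with $x_1=0$ and equal spacing $x_{k+1}-x_k=\delta$; a norm $\|\cdot\|$ on $\mathbb{R}$; $\theta\ge1$ and $N(\cdot)=\theta\|\cdot\|$; cost functions $c^t:M\to\mathbb{R}^+$. Work function: $w^0(x)=N(x)$ and $w^t(x)=\min_{y\in M}\{w^{t-1}(y)+c^t(y)+\theta\|x-y\|\}$ for $x\in M$. *)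

(* Defs.v *)
From Stdlib Require Import Reals List Lra.
Open Scope R_scope.

(* The state set M = {x_1,...,x_m} with x_1 = 0 and x_{k+1} - x_k = d,
   i.e. x_{k+1} = k * d for k = 0..m-1. *)
Definition states (m : nat) (d : R) : list R :=
  map (fun k => INR k * d) (seq 0 m).

Definition min_over (f : R -> R) (l : list R) : R :=
  match l with
  | nil => 0
  | h :: tl => fold_right (fun y acc => Rmin (f y) acc) (f h) tl
  end.

Record is_norm (nrm : R -> R) : Prop := {
  norm_nonneg : forall x, 0 <= nrm x;
  norm_definite : forall x, nrm x = 0 -> x = 0;
  norm_homog : forall a x, nrm (a * x) = Rabs a * nrm x;
  norm_triangle : forall x y, nrm (x + y) <= nrm x + nrm y
}.

Fixpoint work (theta : R) (nrm : R -> R) (M : list R) (c : nat -> R -> R)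
    (t : nat) (x : R) : R :=
  match t with
  | O => theta * nrm x
  | S t' => min_over (fun y => work theta nrm M c t' y + c (S t') y
                               + theta * nrm (x - y)) M
  end.

(* Main.v *)
Require Import Defs.
From Stdlib Require Import Reals List Lra Lia.
Open Scope R_scope.

Lemma fold_le (f : R -> R) a tl :
  fold_right (fun y acc => Rmin (f y) acc) a tl <= a /\
  forall y, In y tl -> fold_right (fun y acc => Rmin (f y) acc) a tl <= f y.
Proof.
  induction tl as [|h tl IH]; simpl.
  - split; [lra| tauto].
  - destruct IH as [IH1 IH2]. split.
    + eapply Rle_trans; [apply Rmin_r|exact IH1].
    + intros y [<-|Hy]; [apply Rmin_l|].
      eapply Rle_trans; [apply Rmin_r|apply IH2; exact Hy].
Qed.

Lemma min_le f l y : In y l -> min_over f l <= f y.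
Proof.
  destruct l as [|h tl]; simpl; [tauto|].
  destruct (fold_le f (f h) tl) as [A B].
  intros [<-|Hy]; auto.
Qed.

Lemma fold_att (f : R -> R) a tl :
  fold_right (fun y acc => Rmin (f y) acc) a tl = a \/
  exists u, In u tl /\ fold_right (fun y acc => Rmin (f y) acc) a tl = f u.
Proof.
  induction tl as [|h tl IH]; simpl; [auto|].
  destruct (Rle_dec (f h) (fold_right (fun y acc => Rmin (f y) acc) a tl)) as [r|r].
  - right. exists h; split; [left; reflexivity| apply Rmin_left; exact r].
  - rewrite Rmin_right by lra.
    destruct IH as [E|[u [Hu E]]]; [left; auto| right; exists u; split; [right; exact Hu| auto]].
Qed.

Lemma min_att f l : l <> nil -> exists u, In u l /\ min_over f l = f u.
Proof.
  destruct l as [|h tl]; [congruence|]. intros _; simpl.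
  destruct (fold_att f (f h) tl) as [E|[u [Hu E]]].
  - exists h; auto.
  - exists u; auto.
Qed.

Lemma min_ge f l B : l <> nil -> (forall y, In y l -> B <= f y) -> B <= min_over f l.
Proof.
  intros Hn H. destruct (min_att f l Hn) as [u [Hu ->]]. auto.
Qed.

Lemma lip theta nrm M c : is_norm nrm -> 0 <= theta -> M <> nil ->
  forall t x y, work theta nrm M c t x <= work theta nrm M c t y + theta * nrm (x - y).
Proof.
  intros Hn Ht HM t. destruct t as [|t']; intros x y; simpl.
  - assert (nrm x <= nrm y + nrm (x - y)).
    { replace x with ((x - y) + y) at 1 by ring.
      pose proof (norm_triangle _ Hn (x - y) y). lra. }
    rewrite <- Rmult_plus_distr_l. apply Rmult_le_compat_l; lra.
  - destruct (min_att (fun u => work theta nrm M c t' u + c (S t') u + theta * nrm (y - u)) M HM)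
      as [u [Hu E]]. rewrite E.
    eapply Rle_trans; [apply (min_le _ _ u Hu)|]. simpl.
    assert (nrm (x - u) <= nrm (x - y) + nrm (y - u)).
    { replace (x - u) with ((x - y) + (y - u)) by ring. apply (norm_triangle _ Hn). }
    assert (theta * nrm (x - u) <= theta * nrm (x - y) + theta * nrm (y - u)).
    { rewrite <- Rmult_plus_distr_l. apply Rmult_le_compat_l; lra. }
    lra.
Qed.

Theorem lemma8 (m : nat) (d theta : R) (nrm : R -> R) (c : nat -> R -> R)
    (t : nat) (x : R) :
  (1 <= m)%nat -> 0 < d -> is_norm nrm -> 1 <= theta ->
  (forall s y, In y (states m d) -> 0 <= c s y) ->
  (1 <= t)%nat ->
  In x (states m d) ->
  work theta nrm (states m d) c t x
    = work theta nrm (states m d) c (t - 1) x + c t x ->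
  ((forall z, In z (states m d) -> x <= z -> c t x <= c t z) ->
   forall z, In z (states m d) -> x <= z ->
     work theta nrm (states m d) c t z
       >= work theta nrm (states m d) c (t - 1) z + c t x) /\
  ((forall z, In z (states m d) -> z <= x -> c t x <= c t z) ->
   forall z, In z (states m d) -> z <= x ->
     work theta nrm (states m d) c t z
       >= work theta nrm (states m d) c (t - 1) z + c t x).
Proof.
  intros Hm Hd Hn Hth Hc Ht Hx Heq.
  set (M := states m d) in *.
  assert (HM : M <> nil).
  { unfold M, states. destruct m; [lia|]. simpl. congruence. }
  destruct t as [|t']; [lia|].
  replace (S t' - 1)%nat with t' in * by lia.
  set (W := work theta nrm M c t') in *.
  assert (HL : forall a b, W a <= W b + theta * nrm (a - b))
    by (intros; apply lip; auto; lra).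
  assert (Habs : forall a, nrm a = Rabs a * nrm 1).
  { intro a. rewrite <- (norm_homog _ Hn a 1). f_equal; ring. }
  pose proof (norm_nonneg _ Hn 1) as H1.
  assert (Hopt : forall y, In y M -> W x + c (S t') x <= W y + c (S t') y + theta * nrm (x - y)).
  { intros y Hy. rewrite <- Heq. simpl. fold W.
    apply (min_le (fun u => W u + c (S t') u + theta * nrm (x - u)) M y Hy). }
  split; intros Hcz z Hz Hxz; apply Rle_ge; simpl; fold W;
    apply min_ge; auto; intros y Hy; simpl.
  - destruct (Rle_dec x y) as [Hxy|Hxy].
    + specialize (Hcz y Hy Hxy). specialize (HL z y). lra.
    + specialize (Hopt y Hy). specialize (HL z x).
      rewrite (Habs (z - y)), (Habs (x - y)), (Habs (z - x)) in *.
      rewrite (Rabs_right (z - y)) in * by lra.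
      rewrite (Rabs_right (x - y)) in * by lra.
      rewrite (Rabs_right (z - x)) in * by lra.
      replace (theta * ((z - y) * nrm 1)) with
        (theta * ((z - x) * nrm 1) + theta * ((x - y) * nrm 1)) by ring.
      lra.
  - destruct (Rle_dec y x) as [Hxy|Hxy].
    + specialize (Hcz y Hy Hxy). specialize (HL z y). lra.
    + specialize (Hopt y Hy). specialize (HL z x).
      rewrite (Habs (z - y)), (Habs (x - y)), (Habs (z - x)) in *.
      rewrite (Rabs_left1 (z - y)) in * by lra.
      rewrite (Rabs_left1 (x - y)) in * by lra.
      rewrite (Rabs_left1 (z - x)) in * by lra.
      replace (theta * (- (z - y) * nrm 1)) with
        (theta * (- (z - x) * nrm 1) + theta * (- (x - y) * nrm 1)) by ring.
      lra.
Qed.
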